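(* Let $X\in\mathbb{R}^{n\times d}$ with rows $x_1,\dots,x_n$, weighted by $w\in\mathbb{R}^n_{>0}$, be $\mu$-complex, and let $\mathcal{W}=\sum_{j=1}^n w_j$. If $i\in[n]$ and $\beta\in\mathbb{R}^d$ satisfy $x_i\beta\le 0.5$, then $w_i\,g(x_i\beta)\le\frac{(20+\mu)w_i}{\mathcal{W}}\,f_w(X\beta)$.
   Context: $g(z)=\ln(1+e^z)$ and $f_w(X\beta)=\sum_{j=1}^n w_j g(x_j\beta)$. $D_w$ is the diagonal matrix with $(D_w)_{ii}=w_i$. For a vector $v$, $v^+$ and $v^-$ denote the vectors of its positive and negative entries. $\mu_w(X)=\sup_{\beta:\,D_wX\beta\neq0}\|(D_wX\beta)^+\|_1/\|(D_wX\beta)^-\|_1$, and $X$ weighted by $w$ is $\mu$-complex if $\mu_w(X)\le\mu$. *)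

(* Defs.v *)
From Stdlib Require Import Reals List.
Import ListNotations.
Open Scope R_scope.

Definition rsum (n : nat) (f : nat -> R) : R :=
  fold_right Rplus 0 (map f (seq 0 n)).

Definition g (z : R) : R := ln (1 + exp z).

(* A matrix X in R^{n x d} is a function of row/column indices (0-based);
   x_j beta = sum_k X j k * beta k. *)
Definition rowdot (d : nat) (X : nat -> nat -> R) (beta : nat -> R) (j : nat) : R :=
  rsum d (fun k => X j k * beta k).

Definition f_w (n d : nat) (w : nat -> R) (X : nat -> nat -> R) (beta : nat -> R) : R :=
  rsum n (fun j => w j * g (rowdot d X beta j)).

Definition DwXb (d : nat) (w : nat -> R) (X : nat -> nat -> R) (beta : nat -> R) (j : nat) : R :=
  w j * rowdot d X beta j.

Definition pos_norm1 (n : nat) (v : nat -> R) : R := rsum n (fun j => Rmax (v j) 0).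
Definition neg_norm1 (n : nat) (v : nat -> R) : R := rsum n (fun j => Rmax (- v j) 0).

(* X weighted by w is mu-complex: mu_w(X) <= mu, i.e. every ratio in the
   supremum (taken as +infinity when the negative part vanishes) is <= mu. *)
Definition mu_complex (n d : nat) (w : nat -> R) (X : nat -> nat -> R) (mu : R) : Prop :=
  forall beta : nat -> R,
    (exists j, (j < n)%nat /\ DwXb d w X beta j <> 0) ->
    0 < neg_norm1 n (DwXb d w X beta) /\
    pos_norm1 n (DwXb d w X beta) / neg_norm1 n (DwXb d w X beta) <= mu.

(* Main.v *)
Require Import Defs.
From Stdlib Require Import Reals List.
From Stdlib Require Import Lra Lia Classical.
Open Scope R_scope.

Lemma fr_le (f h : nat -> R) (l : list nat) :
  (forall j, In j l -> f j <= h j) ->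
  fold_right Rplus 0 (map f l) <= fold_right Rplus 0 (map h l).
Proof.
  induction l as [|a l IH]; simpl; intros H; [lra|].
  assert (f a <= h a) by auto. assert (fold_right Rplus 0 (map f l) <= fold_right Rplus 0 (map h l)) by auto.
  lra.
Qed.

Lemma rsum_le n (f h : nat -> R) :
  (forall j, (j < n)%nat -> f j <= h j) -> rsum n f <= rsum n h.
Proof.
  intros H; unfold rsum; apply fr_le; intros j Hj.
  apply in_seq in Hj; apply H; lia.
Qed.

Lemma fr_add (f h : nat -> R) l :
  fold_right Rplus 0 (map (fun j => f j + h j) l) =
  fold_right Rplus 0 (map f l) + fold_right Rplus 0 (map h l).
Proof. induction l; simpl; [lra| rewrite IHl; lra]. Qed.

Lemma fr_scale c (f : nat -> R) l :
  fold_right Rplus 0 (map (fun j => c * f j) l) = c * fold_right Rplus 0 (map f l).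
Proof. induction l; simpl; [lra| rewrite IHl; lra]. Qed.

Lemma rsum_add n f h : rsum n (fun j => f j + h j) = rsum n f + rsum n h.
Proof. apply fr_add. Qed.
Lemma rsum_scale n c f : rsum n (fun j => c * f j) = c * rsum n f.
Proof. apply fr_scale. Qed.

Lemma rsum_ext n f h : (forall j, f j = h j) -> rsum n f = rsum n h.
Proof. intros H; unfold rsum; f_equal; apply map_ext; auto. Qed.

Lemma rowdot_opp d X beta j :
  rowdot d X (fun k => - beta k) j = - rowdot d X beta j.
Proof.
  unfold rowdot.
  replace (- rsum d (fun k => X j k * beta k)) with ((-1) * rsum d (fun k => X j k * beta k)) by ring.
  rewrite <- rsum_scale. apply rsum_ext; intros; ring.
Qed.

Lemma rsum_pos n w : (forall j, (j < n)%nat -> 0 < w j) -> forall i, (i < n)%nat -> 0 < rsum n w.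
Proof.
  intros H i Hi.
  assert (rsum n (fun j => if Nat.eq_dec j i then w j else 0) <= rsum n w).
  { apply rsum_le; intros j Hj; destruct (Nat.eq_dec j i); [lra| apply Rlt_le, H; auto]. }
  assert (Hl : forall l, In i l -> NoDup l -> fold_right Rplus 0 (map (fun j => if Nat.eq_dec j i then w j else 0) l) = w i).
  { induction l as [|a l IH]; simpl; intros Hin Hnd; [tauto|].
    inversion Hnd as [|a' l' Hnin Hnd' Heq]; subst. destruct (Nat.eq_dec a i).
    - subst a. assert (fold_right Rplus 0 (map (fun j => if Nat.eq_dec j i then w j else 0) l) = 0).
      { clear IH Hin Hnd Hnd'. induction l as [|b l IH2]; simpl; auto.
        destruct (Nat.eq_dec b i). subst b; simpl in Hnin; tauto.
        rewrite IH2; [lra|]. simpl in Hnin; tauto. }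
      lra.
    - destruct Hin; [congruence|]. rewrite IH; auto; lra. }
  unfold rsum in *. rewrite Hl in H0. specialize (H i Hi); lra.
  apply in_seq; lia. apply seq_NoDup.
Qed.

Lemma rsum_nonneg n f : (forall j, (j < n)%nat -> 0 <= f j) -> 0 <= rsum n f.
Proof. intros H. assert (E: rsum n (fun j => 0 * f j) = 0).
  { rewrite rsum_scale; ring. }
  rewrite <- E. apply rsum_le; intros j Hj; specialize (H j Hj); lra. Qed.

Lemma ln_le x y : 0 < x -> x <= y -> ln x <= ln y.
Proof. intros H1 H2. destruct (Req_dec x y). subst; lra.
  apply Rlt_le, ln_increasing; lra. Qed.

Lemma g_ge0 z : 0 <= g z.
Proof. unfold g. rewrite <- ln_1. apply ln_le; [lra|]. pose proof (exp_pos z); lra. Qed.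

Lemma g_ge z : z <= g z.
Proof. unfold g. rewrite <- (ln_exp z) at 1. apply ln_le; [apply exp_pos|]. lra. Qed.

Lemma g_mono a b : a <= b -> g a <= g b.
Proof. intros H. unfold g. apply ln_le. pose proof (exp_pos a); lra.
  destruct (Req_dec a b); [subst; lra|]. pose proof (exp_increasing a b); lra. Qed.

Lemma e_ge2 : 2 <= exp 1.
Proof. pose proof (exp_ineq1 1). lra. Qed.

Lemma g_le2 a : a <= 1/2 -> g a <= 2.
Proof.
  intros H. unfold g. rewrite <- (ln_exp 2). apply ln_le. pose proof (exp_pos a); lra.
  assert (exp a <= exp 1). { destruct (Req_dec a 1). subst; lra. pose proof (exp_increasing a 1); lra. }
  replace 2 with (1+1) by ring. rewrite exp_plus. pose proof e_ge2. nra.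
Qed.

Lemma g_m2 : 1/10 <= g (-2).
Proof.
  unfold g. set (y := exp (-2)).
  assert (Hy : 0 < y) by apply exp_pos.
  assert (Hyy : y * (exp 1 * exp 1) = 1).
  { unfold y. rewrite <- exp_plus, <- exp_plus. replace (-2 + (1+1)) with 0 by ring. apply exp_0. }
  pose proof exp_le_3.
  (* ln(1+y) >= y/(1+y) *)
  assert (Hl : ln (/(1+y)) <= /(1+y) - 1).
  { pose proof (exp_ineq1_le (ln (/(1+y)))). rewrite exp_ln in H0. lra.
    apply Rinv_0_lt_compat; lra. }
  rewrite ln_Rinv in Hl by lra.
  assert (/(1+y) - 1 = - (y/(1+y))) by (field; lra).
  assert (1/10 <= y/(1+y)).
  { apply Rmult_le_reg_r with (1+y). lra.
    replace (y / (1+y) * (1+y)) with y by (field; lra).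
    pose proof e_ge2. assert (exp 1 * exp 1 <= 9) by nra.
    assert (y * (exp 1 * exp 1) <= y * 9) by (apply Rmult_le_compat_l; lra). lra. }
  lra.
Qed.

Theorem lemma8 (n d : nat) (X : nat -> nat -> R) (w : nat -> R) (mu : R)
  (hw : forall j, (j < n)%nat -> 0 < w j)
  (hmu1 : 1 <= mu)
  (hmu : mu_complex n d w X mu)
  (i : nat) (hi : (i < n)%nat) (beta : nat -> R)
  (hb : rowdot d X beta i <= 1/2) :
  w i * g (rowdot d X beta i) <=
    (20 + mu) * w i / rsum n w * f_w n d w X beta.
Proof.
  set (z := rowdot d X beta).
  set (W := rsum n w). set (f := f_w n d w X beta).
  set (v := DwXb d w X beta).
  assert (HW : 0 < W) by (apply (rsum_pos n w hw i hi)).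
  assert (H1 : W <= rsum n (fun j => 10 * (w j * g (z j)) + / 2 * Rmax (- v j) 0)).
  { apply rsum_le; intros j Hj. specialize (hw j Hj). unfold v, DwXb. fold z.
    destruct (Rle_dec (-2) (z j)).
    - pose proof (g_mono _ _ r). pose proof g_m2.
      assert (0 <= Rmax (- (w j * z j)) 0) by apply Rmax_r. nra.
    - assert (- (w j * z j) <= Rmax (- (w j * z j)) 0) by apply Rmax_l.
      pose proof (g_ge0 (z j)). assert (0 <= w j * g (z j)) by (apply Rmult_le_pos; lra). nra. }
  rewrite rsum_add, rsum_scale, rsum_scale in H1.
  fold (f_w n d w X beta) in H1. fold f in H1. fold (neg_norm1 n v) in H1.
  assert (Hpos : pos_norm1 n v <= f).
  { apply rsum_le; intros j Hj. specialize (hw j Hj). unfold v, DwXb. fold z.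
    pose proof (g_ge (z j)); pose proof (g_ge0 (z j)).
    apply Rmax_lub; nra. }
  assert (Hneg : neg_norm1 n v <= mu * pos_norm1 n v).
  { destruct (classic (exists j, (j < n)%nat /\ v j <> 0)) as [Hex|Hno].
    - destruct (hmu (fun k => - beta k)) as [Hp Hr].
      { destruct Hex as [j [Hj Hv]]. exists j; split; auto. unfold DwXb. rewrite rowdot_opp.
        unfold v, DwXb in Hv. intro; apply Hv. lra. }
      assert (E1 : neg_norm1 n (DwXb d w X (fun k => - beta k)) = pos_norm1 n v).
      { apply rsum_ext; intros j. unfold DwXb, v. rewrite rowdot_opp. f_equal. unfold DwXb. ring. }
      assert (E2 : pos_norm1 n (DwXb d w X (fun k => - beta k)) = neg_norm1 n v).
      { apply rsum_ext; intros j. unfold DwXb, v. rewrite rowdot_opp. f_equal. unfold DwXb. ring. }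
      rewrite E1, E2 in *.
      unfold Rdiv in Hr. apply Rmult_le_compat_r with (r := pos_norm1 n v) in Hr; [|lra].
      rewrite Rmult_assoc, Rinv_l in Hr by lra. lra.
    - unfold neg_norm1, pos_norm1. rewrite <- rsum_scale. apply rsum_le; intros j Hj.
      assert (v j = 0). { apply NNPP; intro; apply Hno; eauto. }
      rewrite H. rewrite Ropp_0, Rmax_right by lra. pose proof (Rmax_r 0 0). nra. }
  assert (Hgz := g_le2 _ hb). fold z in Hgz. pose proof (g_ge0 (z i)).
  assert (Hf : 0 <= f).
  { assert (0 <= neg_norm1 n v).
    { unfold neg_norm1. apply rsum_nonneg; intros; apply Rmax_r. }
    assert (0 <= pos_norm1 n v).
    { unfold pos_norm1. apply rsum_nonneg; intros; apply Rmax_r. }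
    lra. }
  assert (H1' : W <= 10 * f + / 2 * neg_norm1 n v) by exact H1.
  assert (HWf : W <= (10 + mu / 2) * f) by nra.
  pose proof (hw i hi).
  unfold Rdiv. apply Rmult_le_reg_r with W; [lra|].
  replace ((20 + mu) * w i * / W * f * W) with ((20 + mu) * w i * f) by (field; lra).
  assert (g (z i) * W <= (20 + mu) * f) by nra.
  nra.
Qed.
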